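(* Let $I$ be a nonempty real interval containing $0$ and let $f\colon I^n\to\mathbb{R}$. The following are equivalent: (i) $f$ is comonotonically modular; (ii) there exist a comonotonically modular $g\colon I_+^n\to\mathbb{R}$ and a comonotonically modular $h\colon I_-^n\to\mathbb{R}$ such that $f_0(\mathbf{x})=g_0(\mathbf{x}^+)+h_0(-\mathbf{x}^-)$ for every $\mathbf{x}\in I^n$; (iii) there exist $g\colon I_+^n\to\mathbb{R}$ and $h\colon I_-^n\to\mathbb{R}$ such that for every $\sigma\in S_n$ and every $\mathbf{x}\in I^n_\sigma$, $$f_0(\mathbf{x})=\sum_{1\leq i\leq p}\Big(h\big(x_{\sigma(i)}\mathbf{1}_{A^\downarrow_\sigma(i)}\big)-h\big(x_{\sigma(i)}\mathbf{1}_{A^\downarrow_\sigma(i-1)}\big)\Big)+\sum_{p+1\leq i\leq n}\Big(g\big(x_{\sigma(i)}\mathbf{1}_{A^\uparrow_\sigma(i)}\big)-g\big(x_{\sigma(i)}\mathbf{1}_{A^\uparrow_\sigma(i+1)}\big)\Big),$$ where $p\in\{0,\ldots,n\}$ is such that $x_{\sigma(p)}<0\leq x_{\sigma(p+1)}$ (with the conventions $x_{\sigma(0)}=-\infty$, $x_{\sigma(n+1)}=+\infty$). Moreover, in (ii) and (iii) one can take $g=f|_{I_+^n}$ and $h=f|_{I_-^n}$.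
   Context: Notation: $[n]=\{1,\ldots,n\}$; $S_n$ is the set of permutations of $[n]$; $I_+=I\cap[0,\infty[$, $I_-=I\cap\,]-\infty,0]$; $\mathbf{1}_A$ is the indicator tuple of $A\subseteq[n]$, $\mathbf{0}=\mathbf{1}_\varnothing$; for a function $u$ defined at $\mathbf{0}$, $u_0=u-u(\mathbf{0})$; $\mathbf{x}^+$ has components $\max(x_i,0)$ and $\mathbf{x}^-=(-\mathbf{x})^+$. For $\sigma\in S_n$, $\mathbb{R}^n_\sigma=\{\mathbf{x}: x_{\sigma(1)}\leq\cdots\leq x_{\sigma(n)}\}$, $I^n_\sigma=I^n\cap\mathbb{R}^n_\sigma$, $A^\uparrow_\sigma(i)=\{\sigma(i),\ldots,\sigma(n)\}$ with $A^\uparrow_\sigma(n+1)=\varnothing$, and $A^\downarrow_\sigma(i)=\{\sigma(1),\ldots,\sigma(i)\}$ with $A^\downarrow_\sigma(0)=\varnothing$. Two tuples in $J^n$ ($J$ an interval) are comonotonic if they both lie in $J^n\cap\mathbb{R}^n_\sigma$ for some $\sigma\in S_n$. A function $u\colon J^n\to\mathbb{R}$ is comonotonically modular if $u(\mathbf{x})+u(\mathbf{x}')=u(\mathbf{x}\wedge\mathbf{x}')+u(\mathbf{x}\vee\mathbf{x}')$ for all comonotonic $\mathbf{x},\mathbf{x}'\in J^n$, where $\wedge,\vee$ are componentwise min and max. *)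

(* Defs.v *)
(* The real line is abstracted to an arbitrary real field
   R : realFieldType (the statement is purely order-algebraic). *)
From HB Require Import structures.
From mathcomp Require Import all_boot all_order all_algebra all_fingroup.
Set Implicit Arguments. Unset Strict Implicit. Unset Printing Implicit Defensive.
Import Order.TTheory GRing.Theory Num.Theory.
Local Open Scope ring_scope.

Section Defs.
Variables (R : realFieldType) (n : nat).

Definition tup := {ffun 'I_n -> R}.

Definition is_interval (J : pred R) : Prop :=
  forall x y z : R, J x -> J z -> x <= y -> y <= z -> J y.

Definition Ipos (J : pred R) : pred R := fun t => J t && (0 <= t).
Definition Ineg (J : pred R) : pred R := fun t => J t && (t <= 0).

Definition inJn (J : pred R) (x : tup) : Prop := forall i, J (x i).

Definition sorted_by (s : 'S_n) (x : tup) : Prop :=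
  forall i j : 'I_n, (i <= j)%N -> x (s i) <= x (s j).

Definition comonotonic (J : pred R) (x y : tup) : Prop :=
  exists s : 'S_n, [/\ inJn J x, sorted_by s x, inJn J y & sorted_by s y].

Definition tmin (x y : tup) : tup := [ffun i => Num.min (x i) (y i)].
Definition tmax (x y : tup) : tup := [ffun i => Num.max (x i) (y i)].

Definition comod (J : pred R) (u : tup -> R) : Prop :=
  forall x y : tup, comonotonic J x y -> u x + u y = u (tmin x y) + u (tmax x y).

Definition tzero : tup := [ffun _ => 0].
Definition zeroed (u : tup -> R) (x : tup) : R := u x - u tzero.

Definition tpos (x : tup) : tup := [ffun i => Num.max (x i) 0].
Definition tneg (x : tup) : tup := [ffun i => Num.max (- x i) 0].
Definition topp (x : tup) : tup := [ffun i => - x i].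

Definition scind (t : R) (A : {set 'I_n}) : tup :=
  [ffun i => if i \in A then t else 0].

(* 1-indexed: Aup s i = {s(i),...,s(n)}, Adown s i = {s(1),...,s(i)};
   with 0-indexed ordinals j, s(j+1) in paper notation is s j here. *)
Definition Aup (s : 'S_n) (i : nat) : {set 'I_n} := [set s j | j : 'I_n & (i <= j.+1)%N].
Definition Adown (s : 'S_n) (i : nat) : {set 'I_n} := [set s j | j : 'I_n & (j.+1 <= i)%N].

(* p is such that x_{s(p)} < 0 <= x_{s(p+1)}, with x_{s(0)} = -oo, x_{s(n+1)} = +oo *)
Definition split_index (s : 'S_n) (x : tup) (p : nat) : Prop :=
  (p <= n)%N /\
  (forall k : 'I_n, k.+1 = p -> x (s k) < 0) /\
  (forall k : 'I_n, nat_of_ord k = p -> 0 <= x (s k)).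

Definition cond_ii (J : pred R) (f g h : tup -> R) : Prop :=
  [/\ comod (Ipos J) g, comod (Ineg J) h &
      forall x : tup, inJn J x ->
        zeroed f x = zeroed g (tpos x) + zeroed h (topp (tneg x))].

(* Condition (iii) for given g, h; sum index k : 'I_n corresponds to i = k+1 *)
Definition cond_iii (J : pred R) (f g h : tup -> R) : Prop :=
  forall (s : 'S_n) (x : tup) (p : nat),
    inJn J x -> sorted_by s x -> split_index s x p ->
    zeroed f x =
      \sum_(k < n | (k < p)%N)
         (h (scind (x (s k)) (Adown s k.+1)) - h (scind (x (s k)) (Adown s k)))
    + \sum_(k < n | (p <= k)%N)
         (g (scind (x (s k)) (Aup s k.+1)) - g (scind (x (s k)) (Aup s k.+2))).

End Defs.

(* Main.v *)
Require Import Defs.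
From HB Require Import structures.
From mathcomp Require Import all_boot all_order all_algebra all_fingroup.
Import Order.TTheory GRing.Theory Num.Theory.
Local Open Scope ring_scope.
Set Implicit Arguments. Unset Strict Implicit.

Section Aux.
Variables (R : realFieldType) (n : nat).
Local Notation tup := (tup R n).

Lemma exists_sort (x : tup) : exists s : 'S_n, sorted_by s x.
Proof.
pose leT := fun i j : 'I_n => x i <= x j.
pose e := sort leT (enum 'I_n).
have se : size e == n by rewrite size_sort size_enum_ord.
pose t := Tuple se.
have ut : uniq t by rewrite /= sort_uniq enum_uniq.
have inj : injective (tnth t) by apply/tuple_uniqP.
exists (perm inj) => i j ij; rewrite !permE (tnth_nth i t i) (tnth_nth i t j).
have srt : sorted leT e by apply: sort_sorted => a b; exact: le_total.
apply: (sorted_leq_nth _ _ _ srt).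
all: try (move=> a b c; exact: le_trans).
all: try (move=> a; exact: lexx).
all: try by rewrite inE /= (eqP se).
exact: ij.
Qed.

Lemma zeroed_comod (J : pred R) (u : tup -> R) :
  (forall x y, comonotonic J x y ->
     zeroed u x + zeroed u y = zeroed u (tmin x y) + zeroed u (tmax x y)) ->
  comod J u.
Proof.
move=> H x y c; move: (H x y c); rewrite /zeroed [LHS]addrACA [RHS]addrACA; exact: addIr.
Qed.

Lemma comod_zeroed (J : pred R) (u : tup -> R) : comod J u ->
  (forall x y, comonotonic J x y ->
     zeroed u x + zeroed u y = zeroed u (tmin x y) + zeroed u (tmax x y)).
Proof.
by move=> H x y c; rewrite /zeroed [LHS]addrACA [RHS]addrACA (H x y c).
Qed.

Lemma sorted_tmin s (x y : tup) : sorted_by s x -> sorted_by s y -> sorted_by s (tmin x y).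
Proof. by move=> hx hy i j ij; rewrite !ffunE le_min2 ?hx ?hy. Qed.
Lemma sorted_tmax s (x y : tup) : sorted_by s x -> sorted_by s y -> sorted_by s (tmax x y).
Proof. by move=> hx hy i j ij; rewrite !ffunE le_max2 ?hx ?hy. Qed.
Lemma inJn_tmin J (x y : tup) : inJn J x -> inJn J y -> inJn J (tmin x y).
Proof. by move=> hx hy i; rewrite ffunE; case: leP. Qed.
Lemma inJn_tmax J (x y : tup) : inJn J x -> inJn J y -> inJn J (tmax x y).
Proof. by move=> hx hy i; rewrite ffunE; case: leP. Qed.


Lemma mono_min (u : R -> R) : {homo u : a b / a <= b} ->
  forall a b, u (Num.min a b) = Num.min (u a) (u b).
Proof.
move=> hu a b; case: (leP a b) => ab; first by rewrite min_l // hu.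
by rewrite min_r // hu // ltW.
Qed.
Lemma mono_max (u : R -> R) : {homo u : a b / a <= b} ->
  forall a b, u (Num.max a b) = Num.max (u a) (u b).
Proof.
move=> hu a b; case: (leP a b) => ab; first by rewrite max_r // hu.
by rewrite max_l // hu // ltW.
Qed.

Definition pp (t : R) := Num.max t 0.
Definition nn (t : R) := - Num.max (- t) 0.
Lemma pp_homo : {homo pp : a b / a <= b}.
Proof. by move=> a b ab; rewrite /pp le_max2. Qed.
Lemma nn_homo : {homo nn : a b / a <= b}.
Proof. by move=> a b ab; rewrite /nn lerN2 le_max2 // lerN2. Qed.
Lemma nnE t : nn t = Num.min t 0.
Proof. by rewrite /nn oppr_max opprK oppr0. Qed.

Lemma tpos_min (x y : tup) : tpos (tmin x y) = tmin (tpos x) (tpos y).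
Proof. by apply/ffunP => i; rewrite !ffunE; exact: (mono_min pp_homo). Qed.
Lemma tpos_max (x y : tup) : tpos (tmax x y) = tmax (tpos x) (tpos y).
Proof. by apply/ffunP => i; rewrite !ffunE; exact: (mono_max pp_homo). Qed.
Lemma tneg_min (x y : tup) : topp (tneg (tmin x y)) = tmin (topp (tneg x)) (topp (tneg y)).
Proof. by apply/ffunP => i; rewrite !ffunE; exact: (mono_min nn_homo). Qed.
Lemma tneg_max (x y : tup) : topp (tneg (tmax x y)) = tmax (topp (tneg x)) (topp (tneg y)).
Proof. by apply/ffunP => i; rewrite !ffunE; exact: (mono_max nn_homo). Qed.

Lemma tpos_com (J : pred R) (s : 'S_n) (x y : tup) : J 0 -> inJn J x -> sorted_by s x -> inJn J y -> sorted_by s y ->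
  comonotonic (Ipos J) (tpos x) (tpos y).
Proof.
move=> J0 ix sx iy sy; exists s; split.
- by move=> i; rewrite /Ipos ffunE; case: (leP (x i) 0) => h; rewrite ?J0 ?ix ?iy ?lexx //=; exact: ltW.
- by move=> i j ij; rewrite !ffunE; exact: pp_homo (sx _ _ ij).
- by move=> i; rewrite /Ipos ffunE; case: (leP (_ i) 0) => h; rewrite ?J0 ?ix ?iy ?lexx //=; exact: ltW.
- by move=> i j ij; rewrite !ffunE; exact: pp_homo (sy _ _ ij).
Qed.

Lemma tneg_com (J : pred R) (s : 'S_n) (x y : tup) : J 0 -> inJn J x -> sorted_by s x -> inJn J y -> sorted_by s y ->
  comonotonic (Ineg J) (topp (tneg x)) (topp (tneg y)).
Proof.
move=> J0 ix sx iy sy; exists s; split.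
- by move=> i; rewrite /Ineg !ffunE -/(nn _) nnE; case: (leP (_ i) 0) => h; rewrite ?J0 ?ix ?iy ?lexx //=; exact: ltW.
- by move=> i j ij; rewrite !ffunE; exact: nn_homo (sx _ _ ij).
- by move=> i; rewrite /Ineg !ffunE -/(nn _) nnE; case: (leP (_ i) 0) => h; rewrite ?J0 ?ix ?iy ?lexx //=; exact: ltW.
- by move=> i j ij; rewrite !ffunE; exact: nn_homo (sy _ _ ij).
Qed.

Lemma ii_to_i (J : pred R) (f g h : tup -> R) : J 0 -> cond_ii J f g h -> comod J f.
Proof.
move=> J0 [cg ch e]; apply: zeroed_comod => x y [s [ix sx iy sy]].
have imin := inJn_tmin ix iy; have imax := inJn_tmax ix iy.
rewrite !e // tpos_min tpos_max tneg_min tneg_max.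
rewrite [LHS]addrACA [RHS]addrACA.
rewrite (comod_zeroed cg (tpos_com J0 ix sx iy sy)).
by rewrite (comod_zeroed ch (tneg_com J0 ix sx iy sy)).
Qed.


Lemma exists_split (s : 'S_n) (x : tup) : exists p, split_index s x p.
Proof.
pose P k := (n <= k)%N || [exists j : 'I_n, (nat_of_ord j == k) && (0 <= x (s j))].
have ex : exists k, P k by exists n; rewrite /P leqnn.
case: (ex_minnP ex) => p Pp minp; exists p; split; [|split].
- by apply: minp; rewrite /P leqnn.
- move=> k Ek; rewrite ltNge; apply/negP => hk.
  have : (p <= k)%N.
    apply: minp; rewrite /P; apply/orP; right; apply/existsP; exists k.
    by rewrite eqxx hk.
  by rewrite -Ek ltnn.
- move=> k Ek; move: Pp; rewrite /P -Ek leqNgt ltn_ord /=.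
  by case/existsP => j /andP [/eqP jk hj]; have -> : k = j by apply/val_inj; rewrite /= jk.
Qed.

Lemma sign_split (s : 'S_n) (x : tup) p : sorted_by s x -> split_index s x p ->
  forall k : 'I_n, (x (s k) < 0) = (k < p)%N.
Proof.
move=> sx [pn [hneg hpos]] k.
case: (ltnP k p) => kp.
- have p0 : (0 < p)%N by apply: leq_ltn_trans kp.
  have pj : (p.-1 < n)%N by rewrite prednK.
  apply: (le_lt_trans (sx k (Ordinal pj) _)); first by rewrite /= -ltnS prednK.
  by apply: hneg; rewrite /= prednK.
- have pj : (p < n)%N by apply: leq_ltn_trans kp _.
  apply/negbTE; rewrite -leNgt; apply: (le_trans (hpos (Ordinal pj) erefl)).
  exact: sx.
Qed.

Definition psi (g h : tup -> R) (s : 'S_n) (k : 'I_n) (t : R) :=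
  if t < 0 then h (scind t (Adown s k.+1)) - h (scind t (Adown s k))
  else g (scind t (Aup s k.+1)) - g (scind t (Aup s k.+2)).

Lemma split_sum (g h : tup -> R) s (x : tup) p : sorted_by s x -> split_index s x p ->
  \sum_(k < n | (k < p)%N)
         (h (scind (x (s k)) (Adown s k.+1)) - h (scind (x (s k)) (Adown s k)))
    + \sum_(k < n | (p <= k)%N)
         (g (scind (x (s k)) (Aup s k.+1)) - g (scind (x (s k)) (Aup s k.+2)))
  = \sum_(k < n) psi g h s k (x (s k)).
Proof.
move=> sx sp; rewrite [RHS](bigID (fun k : 'I_n => (k < p)%N)) /=.
congr (_ + _); apply: eq_big => // k.
- by move=> kp; rewrite /psi (sign_split sx sp) kp.
- by rewrite leqNgt.
- by move=> kp; rewrite /psi (sign_split sx sp) ltnNge kp.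
Qed.

Lemma psi_mod (u : R -> R) a b : u a + u b = u (Num.min a b) + u (Num.max a b).
Proof. by case: (leP a b) => _ //; rewrite addrC. Qed.

Lemma iii_to_i (J : pred R) (f g h : tup -> R) : cond_iii J f g h -> comod J f.
Proof.
move=> e; apply: zeroed_comod => x y [s [ix sx iy sy]].
have imin := inJn_tmin ix iy; have imax := inJn_tmax ix iy.
have smin := sorted_tmin sx sy; have smax := sorted_tmax sx sy.
case: (exists_split s x) => p1 h1; case: (exists_split s y) => p2 h2.
case: (exists_split s (tmin x y)) => p3 h3; case: (exists_split s (tmax x y)) => p4 h4.
rewrite (e s x p1) // (e s y p2) // (e s _ p3) // (e s _ p4) //.
rewrite !(split_sum g h) // -!big_split /=; apply: eq_bigr => k _.
by rewrite !ffunE psi_mod.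
Qed.


Lemma i_to_ii (J : pred R) (f : tup -> R) : J 0 -> comod J f -> cond_ii J f f f.
Proof.
move=> J0 hf; split.
- move=> x y [s [ix sx iy sy]]; apply: hf; exists s; split => // i.
  + by case/andP: (ix i).
  + by case/andP: (iy i).
- move=> x y [s [ix sx iy sy]]; apply: hf; exists s; split => // i.
  + by case/andP: (ix i).
  + by case/andP: (iy i).
- move=> x ix; case: (exists_sort x) => s sx.
  have c : comonotonic J x (tzero R n).
    by exists s; split => // [i|i j _]; rewrite !ffunE ?lexx.
  have E := hf _ _ c.
  have e1 : tmin x (tzero R n) = topp (tneg x).
    by apply/ffunP => i; rewrite !ffunE oppr_max opprK oppr0.
  have e2 : tmax x (tzero R n) = tpos x by apply/ffunP => i; rewrite !ffunE.
  rewrite e1 e2 in E; rewrite /zeroed [RHS]addrACA [f (tpos x) + _]addrC -E.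
  by rewrite -addrA; congr (_ + _); rewrite addrA addrN add0r.
Qed.

Definition mono (F : 'I_n -> R) := forall i j : 'I_n, (i <= j)%N -> F i <= F j.
Definition mk (s : 'S_n) (F : 'I_n -> R) : tup := [ffun j => F ((s^-1)%g j)].
Lemma mkE s F k : mk s F (s k) = F k.
Proof. by rewrite ffunE permK. Qed.
Lemma mk_eq s F G : F =1 G -> mk s F = mk s G.
Proof. by move=> e; apply/ffunP => j; rewrite !ffunE e. Qed.

Lemma mk_mod (J : pred R) f s F G : comod J f -> (forall k, J (F k)) -> (forall k, J (G k)) ->
  mono F -> mono G ->
  f (mk s F) + f (mk s G) =
  f (mk s (fun k => Num.min (F k) (G k))) + f (mk s (fun k => Num.max (F k) (G k))).
Proof.
move=> hf jF jG mF mG.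
have -> : mk s (fun k => Num.min (F k) (G k)) = tmin (mk s F) (mk s G).
  by apply/ffunP => j; rewrite !ffunE.
have -> : mk s (fun k => Num.max (F k) (G k)) = tmax (mk s F) (mk s G).
  by apply/ffunP => j; rewrite !ffunE.
apply: hf; exists s; split.
- by move=> j; rewrite ffunE.
- by move=> i j ij; rewrite !mkE; apply: mF.
- by move=> j; rewrite ffunE.
- by move=> i j ij; rewrite !mkE; apply: mG.
Qed.

Lemma scind_Aup s t i : scind t (Aup s i) = mk s (fun j => if (i <= j.+1)%N then t else 0).
Proof.
apply/ffunP => j; rewrite !ffunE -{1}(permKV s j) /Aup mem_imset ?inE //.
exact: perm_inj.
Qed.
Lemma scind_Adown s t i : scind t (Adown s i) = mk s (fun j => if (j.+1 <= i)%N then t else 0).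
Proof.
apply/ffunP => j; rewrite !ffunE -{1}(permKV s j) /Adown mem_imset ?inE //.
exact: perm_inj.
Qed.

Lemma sub_swap (a b c d : R) : a + b = c + d -> a - d = c - b.
Proof. by move=> E; rewrite -(addrK b a) E addrAC addrK. Qed.


Definition Wt s (x : tup) (i : nat) := mk s (fun j : 'I_n => if (j < i)%N then x (s j) else 0).
Definition Zt s (x : tup) (i : nat) := mk s (fun j : 'I_n => if (i <= j)%N then x (s j) else 0).

Lemma neg_step (J : pred R) f s (x : tup) p (k : 'I_n) : J 0 -> comod J f -> inJn J x ->
  sorted_by s x -> split_index s x p -> (k < p)%N ->
  f (scind (x (s k)) (Adown s k.+1)) - f (scind (x (s k)) (Adown s k))
  = f (Wt s x k.+1) - f (Wt s x k).
Proof.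
move=> J0 hf ix sx sp kp.
have mneg : x (s k) < 0 by rewrite (sign_split sx sp).
rewrite !scind_Adown; apply: sub_swap.
have mW : mono (fun j : 'I_n => if (j < k)%N then x (s j) else 0).
  move=> i j ij; case: (ltnP i k) => ik; case: (ltnP j k) => jk //.
  + by apply: sx.
  + by apply: ltW; rewrite (sign_split sx sp) (ltn_trans ik kp).
  + by move: (leq_trans ik ij); rewrite leqNgt jk.
have mA : mono (fun j : 'I_n => if (j.+1 <= k.+1)%N then x (s k) else 0).
  move=> i j ij; rewrite !ltnS; case: (leqP i k) => ik; case: (leqP j k) => jk //.
  + exact: ltW.
  + by move: (leq_trans ij jk); rewrite leqNgt ik.
have jW : forall j : 'I_n, J (if (j < k)%N then x (s j) else 0) by move=> j; case: ifP.
have jA : forall j : 'I_n, J (if (j.+1 <= k.+1)%N then x (s k) else 0) by move=> j; case: ifP.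
rewrite /Wt (mk_mod s hf jA jW mA mW).
congr (f _ + f _); apply: mk_eq => j /=; rewrite !ltnS; case: (ltngtP j k) => hjk //.
- by rewrite min_r //; apply: sx; apply: ltnW.
all: first [ by rewrite minxx | by rewrite maxxx | by rewrite min_r // ltW | by rewrite max_r // ltW | by rewrite max_l //; apply: sx; apply: ltnW | by rewrite min_r //; apply: sx; apply: ltnW | (have -> : j = k by apply/val_inj); by rewrite min_l // ltW ].
Qed.


Lemma pos_step (J : pred R) f s (x : tup) p (k : 'I_n) : J 0 -> comod J f -> inJn J x ->
  sorted_by s x -> split_index s x p -> (p <= k)%N ->
  f (scind (x (s k)) (Aup s k.+1)) - f (scind (x (s k)) (Aup s k.+2))
  = - (f (Zt s x k.+1) - f (Zt s x k)).
Proof.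
move=> J0 hf ix sx sp pk.
have mpos : 0 <= x (s k) by rewrite leNgt (sign_split sx sp) -leqNgt.
rewrite !scind_Aup opprB; apply: sub_swap.
have mB : mono (fun j : 'I_n => if (k.+1 <= j)%N then x (s j) else 0).
  move=> i j ij; case: (ltnP k i) => ik; case: (ltnP k j) => jk //.
  + by apply: sx.
  + by move: (leq_trans ik ij); rewrite ltnNge jk.
  + by rewrite leNgt (sign_split sx sp) -leqNgt (leq_trans pk (ltnW jk)).
have mA : mono (fun j : 'I_n => if (k.+1 <= j.+1)%N then x (s k) else 0).
  move=> i j ij; rewrite !ltnS; case: (leqP k i) => ik; case: (leqP k j) => jk //.
  by move: (leq_trans ik ij); rewrite leqNgt jk.
have jB : forall j : 'I_n, J (if (k.+1 <= j)%N then x (s j) else 0) by move=> j; case: ifP.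
have jA : forall j : 'I_n, J (if (k.+1 <= j.+1)%N then x (s k) else 0) by move=> j; case: ifP.
rewrite /Zt (mk_mod s hf jA jB mA mB) [RHS]addrC.
congr (f _ + f _); apply: mk_eq => j /=; rewrite !ltnS; case: (ltngtP j k) => hjk //.
all: first [ by rewrite minxx | by rewrite maxxx | by rewrite min_r
  | by rewrite min_l //; apply: sx; apply: ltnW | by rewrite max_r //; apply: sx; apply: ltnW
  | (have -> : j = k by apply/val_inj); by rewrite max_l ].
Qed.

Lemma i_to_iii (J : pred R) (f : tup -> R) : J 0 -> comod J f -> cond_iii J f f f.
Proof.
move=> J0 hf s x p ix sx sp.
have [_ _ e] := i_to_ii J0 hf; rewrite (e x ix) /zeroed addrC.
have pn : (p <= n)%N by case: sp.
congr (_ + _).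
- have W0 : Wt s x 0 = tzero R n by apply/ffunP => j; rewrite !ffunE.
  have Wp : Wt s x p = topp (tneg x).
    apply/ffunP => j; rewrite !ffunE oppr_max opprK oppr0 permKV.
    rewrite -(sign_split sx sp) permKV.
    by case: (ltP (x j) 0) => h.
  rewrite -Wp -W0.
  rewrite (eq_bigr (fun k : 'I_n => f (Wt s x k.+1) - f (Wt s x k))); last first.
    by move=> k kp; apply: (neg_step J0 hf ix sx sp kp).
  rewrite -(telescope_sumr (fun k => f (Wt s x k)) (leq0n p)).
  by rewrite (big_nat_widen _ _ n) // big_mkord.
- have Zn : Zt s x n = tzero R n by apply/ffunP => j; rewrite !ffunE leqNgt ltn_ord.
  have Zp : Zt s x p = tpos x.
    apply/ffunP => j; rewrite !ffunE permKV leqNgt.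
    rewrite -(sign_split sx sp) permKV.
    by case: (ltP (x j) 0) => h.
  rewrite -Zp -Zn.
  rewrite (eq_bigr (fun k : 'I_n => - (f (Zt s x k.+1) - f (Zt s x k)))); last first.
    by move=> k kp; apply: (pos_step J0 hf ix sx sp kp).
  rewrite sumrN.
  have -> : \sum_(i < n | (p <= i)%N) (f (Zt s x i.+1) - f (Zt s x i))
    = \sum_(p <= k < n) (f (Zt s x k.+1) - f (Zt s x k)).
    by rewrite big_geq_mkord; apply: eq_bigl.
  by rewrite telescope_sumr // opprB.
Qed.

End Aux.

Unset Implicit Arguments.

Theorem theorem11 (R : realFieldType) (n : nat) (I : pred R)
  (hI : is_interval I) (h0 : I 0) (f : tup R n -> R) :
  [/\ comod I f <-> (exists g h, cond_ii I f g h),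
      comod I f <-> (exists g h, cond_iii I f g h),
      comod I f -> cond_ii I f f f
    & comod I f -> cond_iii I f f f].
Proof.
have c_ii : comod I f -> cond_ii I f f f := i_to_ii h0.
have c_iii : comod I f -> cond_iii I f f f := i_to_iii h0.
split => //.
- split; first by move=> hf; exists f, f; exact: c_ii.
  by case=> g [h H]; exact: ii_to_i h0 H.
- split; first by move=> hf; exists f, f; exact: c_iii.
  by case=> g [h H]; exact: iii_to_i H.
Qed.
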